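(* Let $H$ be a selfadjoint operator on a separable Hilbert space $\mathcal H$ with spectral family $\{E_\lambda\}_{\lambda\in\mathbb R}$. Let $f,g\in\mathcal H$ and $\lambda\in\mathbb R$, and suppose $\mu\mapsto\langle E_\mu f|g\rangle$ is differentiable at $\lambda$. Then for every $\chi\in C_0^\infty(\mathbb R)$ the function $\mu\mapsto\langle E_\mu\chi(H)f|g\rangle$ is differentiable at $\lambda$ and $$\frac{d\langle E_\lambda\chi(H)f|g\rangle}{d\lambda}=\chi(\lambda)\frac{d\langle E_\lambda f|g\rangle}{d\lambda}.$$
   Context: Here $C_0^\infty(\mathbb R)$ denotes the set of infinitely differentiable complex-valued functions on $\mathbb R$ such that the function and all its derivatives tend to zero at infinity. Inner products are linear in the first argument. *)

(* Defs.v *)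
From Stdlib Require Import Reals.
From Coquelicot Require Import Coquelicot.
Open Scope R_scope.

Record Hilbert := {
  hs :> Type;
  hzero : hs;
  hadd : hs -> hs -> hs;
  hopp : hs -> hs;
  hscal : C -> hs -> hs;
  hip : hs -> hs -> C;
  hadd_assoc : forall u v w, hadd u (hadd v w) = hadd (hadd u v) w;
  hadd_comm : forall u v, hadd u v = hadd v u;
  hadd_0 : forall u, hadd u hzero = u;
  hadd_opp : forall u, hadd u (hopp u) = hzero;
  hscal_1 : forall u, hscal (RtoC 1) u = u;
  hscal_assoc : forall a b u, hscal a (hscal b u) = hscal (Cmult a b) u;
  hscal_addr : forall a u v, hscal a (hadd u v) = hadd (hscal a u) (hscal a v);
  hscal_addl : forall a b u, hscal (Cplus a b) u = hadd (hscal a u) (hscal b u);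
  hip_addl : forall u v w, hip (hadd u v) w = Cplus (hip u w) (hip v w);
  hip_scall : forall a u v, hip (hscal a u) v = Cmult a (hip u v);
  hip_conj : forall u v, hip v u = Cconj (hip u v);
  hip_pos : forall u, 0 <= Re (hip u u);
  hip_def : forall u, hip u u = RtoC 0 -> u = hzero;
  hcomplete : forall s : nat -> hs,
    (forall eps, 0 < eps -> exists N, forall m n, (N <= m)%nat -> (N <= n)%nat ->
       sqrt (Re (hip (hadd (s m) (hopp (s n))) (hadd (s m) (hopp (s n))))) < eps) ->
    exists l, forall eps, 0 < eps -> exists N, forall n, (N <= n)%nat ->
       sqrt (Re (hip (hadd (s n) (hopp l)) (hadd (s n) (hopp l)))) < eps;
  hseparable : exists d : nat -> hs, forall u eps, 0 < eps -> exists n,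
       sqrt (Re (hip (hadd u (hopp (d n))) (hadd u (hopp (d n))))) < eps
}.

Arguments hzero {_}. Arguments hadd {_}. Arguments hopp {_}.
Arguments hscal {_}. Arguments hip {_}.

Definition hsub {Hs : Hilbert} (u v : Hs) : Hs := hadd u (hopp v).
Definition hnorm {Hs : Hilbert} (u : Hs) : R := sqrt (Re (hip u u)).

Definition is_linear {Hs : Hilbert} (P : Hs -> Hs) : Prop :=
  (forall u v, P (hadd u v) = hadd (P u) (P v)) /\
  (forall a u, P (hscal a u) = hscal a (P u)).

Definition is_orth_proj {Hs : Hilbert} (P : Hs -> Hs) : Prop :=
  is_linear P /\ (forall u, P (P u) = P u) /\ (forall u v, hip (P u) v = hip u (P v)).

Definition spectral_family {Hs : Hilbert} (E : R -> Hs -> Hs) : Prop :=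
  (forall l, is_orth_proj (E l)) /\
  (forall l m u, E l (E m u) = E (Rmin l m) u) /\
  (forall l u eps, 0 < eps -> exists del, 0 < del /\
       forall m, l <= m < l + del -> hnorm (hsub (E m u) (E l u)) < eps) /\
  (forall u eps, 0 < eps -> exists M, forall m,
       (m <= - M -> hnorm (E m u) < eps) /\ (M <= m -> hnorm (hsub (E m u) u) < eps)).

(* Riemann--Stieltjes sum for the tagged partition t 0 <= xi 0 <= t 1 <= ... <= t n *)
Fixpoint RSsum (phi F : R -> C) (t xi : nat -> R) (n : nat) : C :=
  match n with
  | O => RtoC 0
  | S k => Cplus (RSsum phi F t xi k) (Cmult (phi (xi k)) (Cminus (F (t (S k))) (F (t k))))
  end.

Definition is_RS (phi F : R -> C) (a b : R) (I : C) : Prop :=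
  a <= b /\
  forall eps, 0 < eps -> exists del, 0 < del /\
    forall (n : nat) (t xi : nat -> R),
      t O = a -> t n = b ->
      (forall i, (i < n)%nat -> t i <= xi i <= t (S i) /\ t (S i) - t i < del) ->
      Cmod (Cminus (RSsum phi F t xi n) I) < eps.

Definition is_RS_R (phi F : R -> C) (I : C) : Prop :=
  forall eps, 0 < eps -> exists M, forall a b, a <= - M -> M <= b ->
    exists J, is_RS phi F a b J /\ Cmod (Cminus J I) < eps.

(* H defined on the domain D (values of H outside D are irrelevant) *)
Definition selfadjoint {Hs : Hilbert} (D : Hs -> Prop) (H : Hs -> Hs) : Prop :=
  D hzero /\
  (forall u v, D u -> D v -> D (hadd u v) /\ H (hadd u v) = hadd (H u) (H v)) /\
  (forall a u, D u -> D (hscal a u) /\ H (hscal a u) = hscal a (H u)) /\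
  (forall u eps, 0 < eps -> exists v, D v /\ hnorm (hsub u v) < eps) /\
  (* H^* = H, including equality of domains:
     (g in D(H^* ) and H^* g = h)  <->  (g in D(H) and h = H g) *)
  (forall g h, (forall f, D f -> hip (H f) g = hip f h) <-> (D g /\ h = H g)).

Definition spectral_family_of {Hs : Hilbert} (D : Hs -> Prop) (H : Hs -> Hs)
    (E : R -> Hs -> Hs) : Prop :=
  spectral_family E /\
  (forall f, D f <-> exists I, is_RS_R (fun l => RtoC (l * l)) (fun m => hip (E m f) f) I) /\
  (forall f g, D f -> is_RS_R (fun l => RtoC l) (fun m => hip (E m f) g) (hip (H f) g)).

(* X = chi(H) = int chi(lambda) dE_lambda (functional calculus, weak form:
   <X u|v> = int chi(lambda) d<E_lambda u|v> for all u, v; this determines X uniquely) *)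
Definition is_fun_calc {Hs : Hilbert} (E : R -> Hs -> Hs) (chi : R -> C) (X : Hs -> Hs) : Prop :=
  forall u v, is_RS_R chi (fun m => hip (E m u) v) (hip (X u) v).

Definition smooth_vanishing (h : R -> R) : Prop :=
  (forall n x, ex_derive_n h n x) /\
  (forall n, is_lim (Derive_n h n) p_infty 0 /\ is_lim (Derive_n h n) m_infty 0).

Definition C0inf (chi : R -> C) : Prop :=
  smooth_vanishing (fun x => Re (chi x)) /\ smooth_vanishing (fun x => Im (chi x)).

(* Main.v *)
Require Import Defs.
From Stdlib Require Import Reals Lra Psatz Lia.
From Coquelicot Require Import Coquelicot.
Open Scope R_scope.

Lemma sqrt_sum_le (a b : R) : sqrt (a*a + b*b) <= Rabs a + Rabs b.
Proof.
  rewrite <- (sqrt_Rsqr (Rabs a + Rabs b)) by (pose proof (Rabs_pos a); pose proof (Rabs_pos b); lra).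
  apply sqrt_le_1_alt. unfold Rsqr.
  pose proof (Rabs_pos a); pose proof (Rabs_pos b).
  assert (a*a = Rabs a * Rabs a) by (rewrite <- Rabs_mult; rewrite Rabs_pos_eq; nra).
  assert (b*b = Rabs b * Rabs b) by (rewrite <- Rabs_mult; rewrite Rabs_pos_eq; nra).
  nra.
Qed.

Lemma le_sqrt_sum (a b : R) : Rabs a <= sqrt (a*a + b*b).
Proof.
  rewrite <- (sqrt_Rsqr (Rabs a)) by apply Rabs_pos.
  apply sqrt_le_1_alt. unfold Rsqr. 
  assert (a*a = Rabs a * Rabs a) by (rewrite <- Rabs_mult; rewrite Rabs_pos_eq; nra). nra.
Qed.

Lemma abs_R (z : R) : abs (K:=R_AbsRing) z = Rabs z. Proof. reflexivity. Qed.
Lemma mult_R (a b : R) : mult (K:=R_AbsRing) a b = a * b. Proof. reflexivity. Qed.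

Lemma le_sqrt_sum' (a b : R) : Rabs b <= sqrt (a*a + b*b).
Proof. rewrite Rplus_comm. apply le_sqrt_sum. Qed.

Definition Cdiff (F : R -> C) x l : Prop :=
  forall eps, 0 < eps -> exists del, 0 < del /\ forall y, Rabs (y - x) < del ->
    Rabs (fst (F y) - fst (F x) - (y - x) * fst l) <= eps * Rabs (y - x) /\
    Rabs (snd (F y) - snd (F x) - (y - x) * snd l) <= eps * Rabs (y - x).

Lemma Cdiff_of (F : R -> C) x l : is_derive F x l -> Cdiff F x l.
Proof.
  intros [_ Hd] eps Heps.
  assert (Hl : is_filter_lim (locally x) x) by (intros P HP; exact HP).
  destruct (Hd x Hl (mkposreal eps Heps)) as [del Hdel].
  exists del. split. apply cond_pos. intros y Hy.
  specialize (Hdel y Hy). revert Hdel.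
  unfold norm, minus, plus, opp, scal; simpl. unfold prod_norm, prod_plus, prod_opp, prod_scal; simpl.
  unfold norm, abs,  plus, opp, scal, mult, minus; simpl. intros Hdel.
  unfold abs, mult in Hdel; simpl in Hdel; rewrite ?Rmult_1_r in Hdel.
  split; eapply Rle_trans; [|exact Hdel| |exact Hdel].
  - unfold Rminus. rewrite <- Rabs_Rabsolu at 1. apply le_sqrt_sum.
  - unfold Rminus. rewrite <- Rabs_Rabsolu at 1. apply le_sqrt_sum'.
Qed.

Lemma Cdiff_to (F : R -> C) x l : Cdiff F x l -> is_derive F x l.
Proof.
  intros Hc. split. apply is_linear_scal_l. intros x0 Hx.
  assert (x0 = x). { symmetry. apply (is_filter_lim_locally_unique (K:=R_AbsRing) (V:=R_NormedModule)). exact Hx. } subst x0.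
  intros eps. destruct (Hc (eps/2)) as [del [Hdel H]]. destruct eps; simpl; lra.
  exists (mkposreal del Hdel). intros y Hy. specialize (H y Hy).
  unfold norm, minus, plus, opp, scal; simpl. unfold prod_norm, prod_plus, prod_opp, prod_scal; simpl.
  unfold norm, abs,  plus, opp, scal, mult, minus; simpl.
  unfold abs, mult; simpl; rewrite ?Rmult_1_r. eapply Rle_trans. apply sqrt_sum_le. rewrite !Rabs_Rabsolu. unfold Rminus in H. lra.
Qed.


Fixpoint rsum (a b : R -> R) (p s : R) (n : nat) : R :=
  match n with
  | O => 0
  | S k => rsum a b p s k + a (p + INR k * s) * (b (p + INR (S k) * s) - b (p + INR k * s))
  end.

Lemma abel (a b : R -> R) p s al be db lam A B L (N : nat) :
  0 <= s -> 0 <= A -> 0 <= B ->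
  (forall i, (i <= N)%nat -> Rabs (a (p + INR i * s) - al) <= B) ->
  (forall i, (i <= N)%nat -> Rabs (b (p + INR i * s) - be - db * (p + INR i * s - lam)) <= A) ->
  (forall i, (i < N)%nat -> Rabs (a (p + INR (S i) * s) - a (p + INR i * s)) <= L * s) ->
  forall n, (n <= N)%nat ->
  Rabs (rsum a b p s n - al * (b (p + INR n * s) - b (p + INR 0 * s))
        - (a (p + INR n * s) - al) * (b (p + INR n * s) - be - db * (p + INR n * s - lam))
        + (a (p + INR 0 * s) - al) * (b (p + INR 0 * s) - be - db * (p + INR 0 * s - lam)))
  <= INR n * (B * Rabs db * s + L * s * A).
Proof.
  intros Hs HA HB Ha Hb Hl n. induction n as [|n IH]; intros Hn.
  - simpl. replace (0 - al * (b (p + 0 * s) - b (p + 0 * s)) -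
   (a (p + 0 * s) - al) * (b (p + 0 * s) - be - db * (p + 0 * s - lam)) +
   (a (p + 0 * s) - al) * (b (p + 0 * s) - be - db * (p + 0 * s - lam))) with 0 by ring.
    rewrite Rabs_R0. lra.
  - specialize (IH ltac:(lia)).
    set (t0 := p + INR 0 * s) in *.
    set (tn := p + INR n * s) in *.
    set (tn1 := p + INR (S n) * s).
    assert (Ht : tn1 = tn + s) by (unfold tn1, tn; rewrite S_INR; ring).
    set (cn := a tn - al). set (cn1 := a tn1 - al).
    set (Dn := b tn - be - db * (tn - lam)). set (Dn1 := b tn1 - be - db * (tn1 - lam)).
    set (R0 := rsum a b p s n - al * (b tn - b t0) - cn * Dn + (a t0 - al) * (b t0 - be - db * (t0 - lam))) in *.
    assert (Heq : rsum a b p s (S n) - al * (b tn1 - b t0) - cn1 * Dn1 +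
                  (a t0 - al) * (b t0 - be - db * (t0 - lam))
                  = R0 + (cn * db * s + (cn - cn1) * Dn1)).
    { change (rsum a b p s (S n)) with (rsum a b p s n + a tn * (b tn1 - b tn)).
      unfold R0, cn, cn1, Dn, Dn1.
      generalize (b tn1) (b tn) (b t0) (a tn) (a tn1) (a t0) (rsum a b p s n).
      intros. rewrite Ht. ring. }
    rewrite Heq.
    eapply Rle_trans. apply Rabs_triang.
    rewrite S_INR.
    assert (H1 : Rabs (cn * db * s + (cn - cn1) * Dn1) <= B * Rabs db * s + L * s * A).
    { eapply Rle_trans. apply Rabs_triang.
      rewrite !Rabs_mult, (Rabs_pos_eq s Hs).
      assert (Hc : Rabs cn <= B) by (apply Ha; lia).
      assert (Hd : Rabs Dn1 <= A) by (apply Hb; lia).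
      assert (Hcc : Rabs (cn - cn1) <= L * s).
      { unfold cn, cn1. replace (a tn - al - (a tn1 - al)) with (- (a tn1 - a tn)) by ring.
        rewrite Rabs_Ropp. apply Hl. lia. }
      pose proof (Rabs_pos db). pose proof (Rabs_pos cn). pose proof (Rabs_pos Dn1).
      pose proof (Rabs_pos (cn - cn1)).
      apply Rplus_le_compat; [|apply Rmult_le_compat; lra].
      apply Rmult_le_compat_r; [lra|]. apply Rmult_le_compat_r; lra. }
    assert (IH' : Rabs R0 <= INR n * (B * Rabs db * s + L * s * A)) by exact IH.
    lra.
Qed.

Lemma real_key (a b : R -> R) lam db L d0 :
  0 <= L -> 0 < d0 ->
  (forall x y, Rabs (x - lam) <= d0 -> Rabs (y - lam) <= d0 -> Rabs (a x - a y) <= L * Rabs (x - y)) ->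
  (forall eps, 0 < eps -> exists del, 0 < del /\ forall y, Rabs (y - lam) < del ->
      Rabs (b y - b lam - (y - lam) * db) <= eps * Rabs (y - lam)) ->
  forall eps, 0 < eps -> exists del, 0 < del /\ forall p q (N:nat), p <= lam <= q -> q - p < del -> (0 < N)%nat ->
     Rabs (rsum a b p ((q - p) / INR N) N - a lam * db * (q - p)) <= eps * (q - p).
Proof.
  intros HL Hd0 Lip Hb eps Heps.
  set (al := a lam).
  pose proof (Rabs_pos al) as Hal. pose proof (Rabs_pos db) as Hdb.
  set (e' := eps / (2 * (2 * Rabs al + 3 * L + 1))).
  assert (He' : 0 < e') by (unfold e'; apply Rdiv_lt_0_compat; lra).
  assert (He'2 : e' * (2 * Rabs al + 3 * L + 1) = eps / 2) by (unfold e'; field; lra).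
  destruct (Hb e' He') as [d' [Hd' Hb']].
  set (d2 := eps / (2 * (L * Rabs db + 1))).
  assert (Hd2 : 0 < d2) by (unfold d2; apply Rdiv_lt_0_compat; nra).
  assert (Hd2e : d2 * (L * Rabs db + 1) = eps / 2) by (unfold d2; field; nra).
  exists (Rmin (Rmin d' d0) (Rmin 1 d2)).
  split. { repeat apply Rmin_pos; lra. }
  intros p q N Hlam Hpq HN.
  pose proof (Rmin_l (Rmin d' d0) (Rmin 1 d2)). pose proof (Rmin_r (Rmin d' d0) (Rmin 1 d2)).
  pose proof (Rmin_l d' d0). pose proof (Rmin_r d' d0). pose proof (Rmin_l 1 d2). pose proof (Rmin_r 1 d2).
  set (u := q - p) in *.
  assert (Hu : 0 <= u) by (unfold u; lra).
  assert (HNp : 0 < INR N) by (apply lt_0_INR; exact HN).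
  set (s := u / INR N).
  assert (Hs : 0 <= s) by (unfold s; apply Rmult_le_pos; [lra | left; apply Rinv_0_lt_compat; lra]).
  assert (HNs : INR N * s = u) by (unfold s; field; lra).
  assert (Hti : forall i, (i <= N)%nat -> Rabs (p + INR i * s - lam) <= u).
  { intros i Hi. apply le_INR in Hi.
    assert (INR i * s <= INR N * s) by (apply Rmult_le_compat_r; lra).
    pose proof (pos_INR i). assert (0 <= INR i * s) by nra.
    apply Rabs_le; unfold u in *; lra. }
  set (A := e' * u). set (B := L * u).
  assert (HA : 0 <= A) by (unfold A; nra). assert (HB : 0 <= B) by (unfold B; nra).
  assert (Ha : forall i, (i <= N)%nat -> Rabs (a (p + INR i * s) - al) <= B).
  { intros i Hi. unfold al, B. eapply Rle_trans. apply Lip.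
    specialize (Hti i Hi); lra. rewrite Rminus_eq_0, Rabs_R0; lra.
    apply Rmult_le_compat_l; auto. }
  assert (Hbb : forall i, (i <= N)%nat -> Rabs (b (p + INR i * s) - b lam - db * (p + INR i * s - lam)) <= A).
  { intros i Hi. specialize (Hti i Hi).
    replace (b (p + INR i * s) - b lam - db * (p + INR i * s - lam)) with
      (b (p + INR i * s) - b lam - (p + INR i * s - lam) * db) by ring.
    eapply Rle_trans. apply Hb'. lra. unfold A. apply Rmult_le_compat_l; lra. }
  assert (Hl : forall i, (i < N)%nat -> Rabs (a (p + INR (S i) * s) - a (p + INR i * s)) <= L * s).
  { intros i Hi. eapply Rle_trans. apply Lip.
    pose proof (Hti (S i) ltac:(lia)); lra. pose proof (Hti i ltac:(lia)); lra.
    rewrite S_INR. replace (p + (INR i + 1) * s - (p + INR i * s)) with s by ring.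
    rewrite Rabs_pos_eq by lra. lra. }
  pose proof (abel a b p s al (b lam) db lam A B L N Hs HA HB Ha Hbb Hl N (Nat.le_refl N)) as Hab.
  replace (INR N * (B * Rabs db * s + L * s * A)) with (u * (B * Rabs db + L * A)) in Hab
    by (rewrite <- HNs; ring).
  set (X := rsum a b p s N) in *.
  set (bN := b (p + INR N * s)) in *. set (b0 := b (p + INR 0 * s)) in *.
  set (aN := a (p + INR N * s)) in *. set (a0 := a (p + INR 0 * s)) in *.
  assert (HtN : p + INR N * s = p + u) by (rewrite HNs; ring).
  assert (Ht0 : p + INR 0 * s = p) by (simpl; ring).
  set (DN := bN - b lam - db * (p + INR N * s - lam)).
  set (D0 := b0 - b lam - db * (p + INR 0 * s - lam)).
  assert (HDN : Rabs DN <= A) by (apply Hbb; lia).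
  assert (HD0 : Rabs D0 <= A) by (apply Hbb; lia).
  assert (HcN : Rabs (aN - al) <= B) by (apply Ha; lia).
  assert (Hc0 : Rabs (a0 - al) <= B) by (apply Ha; lia).
  assert (Heq : X - al * db * u =
     (X - al * (bN - b0) - (aN - al) * DN + (a0 - al) * D0)
     + al * (DN - D0) + (aN - al) * DN - (a0 - al) * D0).
  { unfold DN, D0. rewrite HtN, Ht0. replace (p + u - lam - (p - lam)) with u by ring.
    ring. }
  rewrite Heq.
  assert (Hab' : Rabs (X - al * (bN - b0) - (aN - al) * DN + (a0 - al) * D0) <= u * (B * Rabs db + L * A))
    by exact Hab.
  set (Y := X - al * (bN - b0) - (aN - al) * DN + (a0 - al) * D0) in *.
  assert (Htri : Rabs (Y + al * (DN - D0) + (aN - al) * DN - (a0 - al) * D0)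
     <= Rabs Y + Rabs al * (Rabs DN + Rabs D0) + Rabs (aN - al) * Rabs DN + Rabs (a0 - al) * Rabs D0).
  { unfold Rminus at 5. eapply Rle_trans. apply Rabs_triang. rewrite Rabs_Ropp, Rabs_mult.
    apply Rplus_le_compat_r. eapply Rle_trans. apply Rabs_triang. rewrite Rabs_mult.
    apply Rplus_le_compat_r. eapply Rle_trans. apply Rabs_triang. rewrite Rabs_mult.
    apply Rplus_le_compat_l. apply Rmult_le_compat_l. apply Rabs_pos.
    unfold Rminus. eapply Rle_trans. apply Rabs_triang. rewrite Rabs_Ropp. lra. }
  eapply Rle_trans. exact Htri.
  pose proof (Rabs_pos DN). pose proof (Rabs_pos D0). pose proof (Rabs_pos (aN - al)).
  pose proof (Rabs_pos (a0 - al)).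
  assert (Hs1 : Rabs al * (Rabs DN + Rabs D0) <= Rabs al * (2 * A)) by (apply Rmult_le_compat_l; lra).
  assert (Hs2 : Rabs (aN - al) * Rabs DN <= B * A) by (apply Rmult_le_compat; lra).
  assert (Hs3 : Rabs (a0 - al) * Rabs D0 <= B * A) by (apply Rmult_le_compat; lra).
  assert (Hfin : u * (B * Rabs db + L * A) + Rabs al * (2 * A) + 2 * (B * A) <= eps * u).
  { unfold A, B.
    assert (Hu1 : u <= 1) by lra. assert (Hud : u <= d2) by lra.
    assert (K0 : 0 <= L * Rabs db) by (apply Rmult_le_pos; lra).
    assert (K1 : L * Rabs db * u <= eps / 2).
    { rewrite <- Hd2e. apply Rle_trans with ((L * Rabs db + 1) * u). nra.
      rewrite Rmult_comm. apply Rmult_le_compat_r; lra. }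
    assert (K2 : e' * (L * u + 2 * Rabs al + 2 * L * u) <= eps / 2).
    { rewrite <- He'2. assert (L * u <= L) by nra. apply Rmult_le_compat_l; lra. }
    assert (Heq2 : u * (L * u * Rabs db + L * (e' * u)) + Rabs al * (2 * (e' * u)) + 2 * (L * u * (e' * u))
       = u * (L * Rabs db * u + e' * (L * u + 2 * Rabs al + 2 * L * u))) by ring.
    rewrite Heq2. rewrite (Rmult_comm eps u). apply Rmult_le_compat_l; lra. }
  lra.
Qed.


Lemma lip_of_smooth (h : R -> R) lam : smooth_vanishing h ->
  exists L d0, 0 <= L /\ 0 < d0 /\ forall x y, Rabs (x - lam) <= d0 -> Rabs (y - lam) <= d0 ->
     Rabs (h x - h y) <= L * Rabs (x - y).
Proof.
  intros [Hd _].
  assert (H1 : forall x, ex_derive h x) by (intro x; exact (Hd 1%nat x)).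
  assert (H2 : ex_derive (Derive h) lam) by exact (Hd 2%nat lam).
  apply ex_derive_continuous in H2.
  destruct (H2 (ball (Derive h lam) (mkposreal 1 Rlt_0_1))) as [e He].
  { apply (locally_ball (Derive h lam) (mkposreal 1 Rlt_0_1)). }
  exists (Rabs (Derive h lam) + 1), (e / 2). split. pose proof (Rabs_pos (Derive h lam)); lra.
  split. pose proof (cond_pos e); lra.
  intros x y Hx Hy.
  destruct (MVT_gen h y x (Derive h)) as [c [Hc Heq]].
  - intros z _. apply Derive_correct. apply H1.
  - intros z _. apply continuity_pt_filterlim. exact (ex_derive_continuous h z (H1 z)).
  - rewrite Heq, Rabs_mult. apply Rmult_le_compat_r. apply Rabs_pos.
    assert (Hcl : Rabs (c - lam) < e).
    { pose proof (Rmin_l y x); pose proof (Rmax_l y x); pose proof (Rmin_r y x); pose proof (Rmax_r y x).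
      apply Rabs_le_between in Hx; apply Rabs_le_between in Hy. pose proof (cond_pos e).
      destruct (Rle_dec y x); [rewrite Rmin_left in Hc by lra; rewrite Rmax_right in Hc by lra
        | rewrite Rmin_right in Hc by lra; rewrite Rmax_left in Hc by lra];
      apply Rabs_lt_between; lra. }
    specialize (He c Hcl). unfold ball in He; simpl in He; unfold AbsRing_ball in He; simpl in He.
    unfold abs, minus, plus, opp in He; simpl in He.
    change (Derive h c + - Derive h lam) with (Derive h c - Derive h lam) in He.
    pose proof (Rabs_triang_inv (Derive h c) (Derive h lam)). lra.
Qed.

Lemma RSsum_comp (chi F : R -> C) a0 s n :
  fst (RSsum chi F (fun i => a0 + INR i * s) (fun i => a0 + INR i * s) n) =
    rsum (fun x => fst (chi x)) (fun x => fst (F x)) a0 s n - rsum (fun x => snd (chi x)) (fun x => snd (F x)) a0 s n /\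
  snd (RSsum chi F (fun i => a0 + INR i * s) (fun i => a0 + INR i * s) n) =
    rsum (fun x => fst (chi x)) (fun x => snd (F x)) a0 s n + rsum (fun x => snd (chi x)) (fun x => fst (F x)) a0 s n.
Proof.
  induction n as [|n [IH1 IH2]].
  - simpl. split; ring.
  - cbn [RSsum rsum]. unfold Cminus. unfold Cplus, Cmult, Copp. cbn [fst snd].
    rewrite IH1, IH2. split; ring.
Qed.

Lemma mono (a0 s : R) (i j : nat) : 0 <= s -> (i <= j)%nat -> a0 + INR i * s <= a0 + INR j * s.
Proof. intros Hs Hij. apply le_INR in Hij. apply Rplus_le_compat_l, Rmult_le_compat_r; auto. Qed.

Lemma shift (a b : R -> R) a0 s (P N Q : nat) : 0 <= s ->
  rsum a (fun m => b (Rmin (a0 + INR (P + N) * s) m)) a0 s (P + N + Q)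
  - rsum a (fun m => b (Rmin (a0 + INR P * s) m)) a0 s (P + N + Q)
  = rsum a b (a0 + INR P * s) s N.
Proof.
  intros Hs.
  set (p := a0 + INR P * s). set (q := a0 + INR (P + N) * s).
  set (diff := fun n => rsum a (fun m => b (Rmin q m)) a0 s n - rsum a (fun m => b (Rmin p m)) a0 s n).
  assert (Hpq : p <= q) by (unfold p, q; apply mono; [lra|lia]).
  assert (H1 : forall n, (n <= P)%nat -> diff n = 0).
  { induction n as [|n IH]; intros Hn. unfold diff; simpl; ring.
    unfold diff in *. cbn [rsum].
    assert (h1 : a0 + INR (S n) * s <= p) by (unfold p, q; apply mono; [lra|lia]).
    assert (h2 : a0 + INR n * s <= p) by (unfold p, q; apply mono; [lra|lia]).
    rewrite !(Rmin_right q), !(Rmin_right p) by lra.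
    specialize (IH ltac:(lia)). lra. }
  assert (H2 : forall k, (k <= N)%nat -> diff (P + k)%nat = rsum a b p s k).
  { induction k as [|k IH]; intros Hk.
    rewrite Nat.add_0_r. apply H1. lia.
    rewrite Nat.add_succ_r. unfold diff in *. cbn [rsum].
    assert (h1 : a0 + INR (S (P + k)) * s <= q) by (unfold p, q; apply mono; [lra|lia]).
    assert (h2 : a0 + INR (P + k) * s <= q) by (unfold p, q; apply mono; [lra|lia]).
    assert (h3 : p <= a0 + INR (S (P + k)) * s) by (unfold p, q; apply mono; [lra|lia]).
    assert (h4 : p <= a0 + INR (P + k) * s) by (unfold p, q; apply mono; [lra|lia]).
    rewrite !(Rmin_right q) by lra. rewrite !(Rmin_left p) by lra.
    specialize (IH ltac:(lia)).
    replace (a0 + INR (S (P + k)) * s) with (p + INR (S k) * s)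
      by (unfold p; rewrite !S_INR, plus_INR; ring).
    replace (a0 + INR (P + k) * s) with (p + INR k * s)
      by (unfold p; rewrite plus_INR; ring).
    lra. }
  assert (H3 : forall j, diff (P + N + j)%nat = rsum a b p s N).
  { induction j as [|j IH].
    rewrite Nat.add_0_r. apply H2. lia.
    rewrite Nat.add_succ_r. unfold diff in *. cbn [rsum].
    assert (h3 : q <= a0 + INR (S (P + N + j)) * s) by (unfold p, q; apply mono; [lra|lia]).
    assert (h4 : q <= a0 + INR (P + N + j) * s) by (unfold p, q; apply mono; [lra|lia]).
    rewrite !(Rmin_left q) by lra. rewrite !(Rmin_left p) by lra.
    lra. }
  apply H3.
Qed.

Lemma fst_le_Cmod (c : C) : Rabs (fst c) <= Cmod c.
Proof. pose proof (Rmax_Cmod c). pose proof (Rmax_l (Rabs (fst c)) (Rabs (snd c))). lra. Qed.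
Lemma snd_le_Cmod (c : C) : Rabs (snd c) <= Cmod c.
Proof. pose proof (Rmax_Cmod c). pose proof (Rmax_r (Rabs (fst c)) (Rabs (snd c))). lra. Qed.

Lemma fst_minus_le (x y : C) : Rabs (fst x - fst y) <= Cmod (Cminus x y).
Proof. exact (fst_le_Cmod (Cminus x y)). Qed.
Lemma snd_minus_le (x y : C) : Rabs (snd x - snd y) <= Cmod (Cminus x y).
Proof. exact (snd_le_Cmod (Cminus x y)). Qed.

Lemma approx (chi F G : R -> C) :
  (forall mu, is_RS_R chi (fun m => F (Rmin mu m)) (G mu)) ->
  forall p q, p < q -> forall eta, 0 < eta -> exists N : nat, (0 < N)%nat /\
    Rabs (fst (G q) - fst (G p) -
      (rsum (fun x => fst (chi x)) (fun x => fst (F x)) p ((q - p) / INR N) N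
       - rsum (fun x => snd (chi x)) (fun x => snd (F x)) p ((q - p) / INR N) N)) < eta /\
    Rabs (snd (G q) - snd (G p) -
      (rsum (fun x => fst (chi x)) (fun x => snd (F x)) p ((q - p) / INR N) N
       + rsum (fun x => snd (chi x)) (fun x => fst (F x)) p ((q - p) / INR N) N)) < eta.
Proof.
  intros HG p q Hpq eta Heta.
  assert (He4 : 0 < eta / 4) by lra.
  destruct (HG q (eta/4) He4) as [M1 HM1].
  destruct (HG p (eta/4) He4) as [M2 HM2].
  set (u := q - p). assert (Hu : 0 < u) by (unfold u; lra).
  destruct (INR_archimed u (Rabs M1 + Rabs M2 + Rabs p + Rabs q) Hu) as [P0 HP0].
  set (a := p - INR P0 * u). set (b := q + INR P0 * u).
  pose proof (Rabs_pos M1). pose proof (Rabs_pos M2).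
  pose proof (Rle_abs M1). pose proof (Rle_abs M2). pose proof (Rle_abs (-M1)). pose proof (Rle_abs (-M2)).
  rewrite Rabs_Ropp in *.
  pose proof (Rle_abs p). pose proof (Rle_abs q). pose proof (Rle_abs (-p)). pose proof (Rle_abs (-q)).
  rewrite Rabs_Ropp in *.
  destruct (HM1 a b) as [J1 [HJ1 HJ1c]]; try (unfold a, b; lra).
  destruct (HM2 a b) as [J2 [HJ2 HJ2c]]; try (unfold a, b; lra).
  destruct HJ1 as [_ HJ1]. destruct HJ2 as [_ HJ2].
  destruct (HJ1 (eta/4) He4) as [d1 [Hd1 HR1]].
  destruct (HJ2 (eta/4) He4) as [d2 [Hd2 HR2]].
  set (dm := Rmin d1 d2). assert (Hdm : 0 < dm) by (apply Rmin_pos; lra).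
  assert (dm <= d1) by apply Rmin_l. assert (dm <= d2) by apply Rmin_r.
  destruct (INR_archimed dm u Hdm) as [N HN].
  assert (HNp : (0 < N)%nat).
  { destruct N. simpl in HN. lra. lia. }
  assert (HNr : 0 < INR N) by (apply lt_0_INR; exact HNp).
  exists N. split. exact HNp.
  set (s := u / INR N).
  assert (Hs : 0 < s) by (unfold s; apply Rdiv_lt_0_compat; lra).
  assert (Hsd : s < dm).
  { unfold s. apply (Rmult_lt_reg_r (INR N)). lra. field_simplify; lra. }
  set (t := fun i : nat => a + INR i * s).
  set (n := (P0 * N + N + P0 * N)%nat).
  assert (Ht0 : t O = a) by (unfold t; simpl; ring).
  assert (Htn : t n = b).
  { unfold t, n, a, b, s, u. rewrite !plus_INR, !mult_INR. field. lra. }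
  assert (Htp : forall i, (i < n)%nat -> t i <= t i <= t (S i) /\ t (S i) - t i < dm).
  { intros i _. unfold t. rewrite S_INR. replace (a + (INR i + 1) * s) with (a + INR i * s + s) by ring. split; [split|]; lra. }
  assert (Htp1 : forall i, (i < n)%nat -> t i <= t i <= t (S i) /\ t (S i) - t i < d1).
  { intros i Hi. destruct (Htp i Hi). split; [assumption|lra]. }
  assert (Htp2 : forall i, (i < n)%nat -> t i <= t i <= t (S i) /\ t (S i) - t i < d2).
  { intros i Hi. destruct (Htp i Hi). split; [assumption|lra]. }
  specialize (HR1 n t t Ht0 Htn Htp1). specialize (HR2 n t t Ht0 Htn Htp2).
  destruct (RSsum_comp chi (fun m => F (Rmin q m)) a s n) as [Cq1 Cq2].
  destruct (RSsum_comp chi (fun m => F (Rmin p m)) a s n) as [Cp1 Cp2].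
  fold t in Cq1, Cq2, Cp1, Cp2.
  assert (Hp : a + INR (P0 * N) * s = p).
  { unfold a, s. rewrite mult_INR. field. lra. }
  assert (Hq : a + INR (P0 * N + N) * s = q).
  { unfold a, s, u. rewrite plus_INR, mult_INR. field. lra. }
  pose proof (shift (fun x => fst (chi x)) (fun x => fst (F x)) a s (P0 * N) N (P0 * N) ltac:(lra)) as S1.
  pose proof (shift (fun x => snd (chi x)) (fun x => snd (F x)) a s (P0 * N) N (P0 * N) ltac:(lra)) as S2.
  pose proof (shift (fun x => fst (chi x)) (fun x => snd (F x)) a s (P0 * N) N (P0 * N) ltac:(lra)) as S3.
  pose proof (shift (fun x => snd (chi x)) (fun x => fst (F x)) a s (P0 * N) N (P0 * N) ltac:(lra)) as S4.
  rewrite Hp, Hq in S1, S2, S3, S4. cbv beta in S1, S2, S3, S4.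
  fold n in S1, S2, S3, S4.

  pose proof (fst_minus_le (RSsum chi (fun m => F (Rmin q m)) t t n) J1) as F1.
  pose proof (fst_minus_le (RSsum chi (fun m => F (Rmin p m)) t t n) J2) as F2.
  pose proof (fst_minus_le J1 (G q)) as F3.
  pose proof (fst_minus_le J2 (G p)) as F4.
  pose proof (snd_minus_le (RSsum chi (fun m => F (Rmin q m)) t t n) J1) as G1.
  pose proof (snd_minus_le (RSsum chi (fun m => F (Rmin p m)) t t n) J2) as G2.
  pose proof (snd_minus_le J1 (G q)) as G3.
  pose proof (snd_minus_le J2 (G p)) as G4.
  rewrite Cq1 in F1. rewrite Cp1 in F2. rewrite Cq2 in G1. rewrite Cp2 in G2.
  split.
  - apply Rabs_lt_between. apply Rabs_le_between in F1, F2, F3, F4. lra.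
  - apply Rabs_lt_between. apply Rabs_le_between in G1, G2, G3, G4. lra.
Qed.

Lemma le_eps (x c : R) : (forall eta, 0 < eta -> x <= c + eta) -> x <= c.
Proof.
  intros H. destruct (Rle_dec x c) as [h|h]; auto.
  assert (0 < (x - c) / 2) by lra. specialize (H _ H0). lra.
Qed.

Lemma Rabs_le_from (x c e : R) : (forall eta, 0 < eta -> Rabs x <= c + eta) -> Rabs x <= c.
Proof. apply le_eps. Qed.

Lemma assemble (chi F G : R -> C) lam d :
  (forall mu, is_RS_R chi (fun m => F (Rmin mu m)) (G mu)) ->
  Cdiff F lam d ->
  smooth_vanishing (fun x => fst (chi x)) -> smooth_vanishing (fun x => snd (chi x)) ->
  Cdiff G lam (Cmult (chi lam) d).
Proof.
  intros HG HF Hc1 Hc2 eps Heps.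
  destruct (lip_of_smooth _ lam Hc1) as [L1 [e1 [HL1 [He1 Lip1]]]].
  destruct (lip_of_smooth _ lam Hc2) as [L2 [e2 [HL2 [He2 Lip2]]]].
  assert (HF1 : forall eps, 0 < eps -> exists del, 0 < del /\ forall y, Rabs (y - lam) < del ->
      Rabs ((fun x => fst (F x)) y - (fun x => fst (F x)) lam - (y - lam) * fst d) <= eps * Rabs (y - lam)).
  { intros e He. destruct (HF e He) as [del [Hd H]]. exists del. split; auto. intros y Hy. apply (H y Hy). }
  assert (HF2 : forall eps, 0 < eps -> exists del, 0 < del /\ forall y, Rabs (y - lam) < del ->
      Rabs ((fun x => snd (F x)) y - (fun x => snd (F x)) lam - (y - lam) * snd d) <= eps * Rabs (y - lam)).
  { intros e He. destruct (HF e He) as [del [Hd H]]. exists del. split; auto. intros y Hy. apply (H y Hy). }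
  assert (He2' : 0 < eps / 2) by lra.
  destruct (real_key _ _ lam (fst d) L1 e1 HL1 He1 Lip1 HF1 (eps/2) He2') as [k11 [Hk11 K11]].
  destruct (real_key _ _ lam (snd d) L2 e2 HL2 He2 Lip2 HF2 (eps/2) He2') as [k22 [Hk22 K22]].
  destruct (real_key _ _ lam (snd d) L1 e1 HL1 He1 Lip1 HF2 (eps/2) He2') as [k12 [Hk12 K12]].
  destruct (real_key _ _ lam (fst d) L2 e2 HL2 He2 Lip2 HF1 (eps/2) He2') as [k21 [Hk21 K21]].
  set (del := Rmin (Rmin k11 k22) (Rmin k12 k21)).
  assert (Hdel : 0 < del) by (repeat apply Rmin_pos; lra).
  assert (D1 : del <= k11) by (unfold del; eapply Rle_trans; apply Rmin_l).
  assert (D2 : del <= k22) by (unfold del; eapply Rle_trans; [apply Rmin_l|apply Rmin_r]).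
  assert (D3 : del <= k12) by (unfold del; eapply Rle_trans; [apply Rmin_r|apply Rmin_l]).
  assert (D4 : del <= k21) by (unfold del; eapply Rle_trans; [apply Rmin_r|apply Rmin_r]).
  exists del. split; auto. intros y Hy.
  unfold Cmult. cbn [fst snd].
  set (c1 := fst (chi lam)). set (c2 := snd (chi lam)).
  cbv beta in K11, K22, K12, K21. fold c1 c2 in K11, K22, K12, K21.
  destruct (Rtotal_order y lam) as [Hlt | [Heq | Hgt]].
  -
    rewrite (Rabs_left (y - lam)) in Hy |- * by lra.
    assert (Hyl : lam - y < del) by lra.
    split; apply Rabs_le_from; try exact 0; intros eta Heta;
    destruct (approx chi F G HG y lam Hlt eta Heta) as [N [HN [A1 A2]]];
    specialize (K11 y lam N ltac:(lra) ltac:(lra) HN);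
    specialize (K22 y lam N ltac:(lra) ltac:(lra) HN);
    specialize (K12 y lam N ltac:(lra) ltac:(lra) HN);
    specialize (K21 y lam N ltac:(lra) ltac:(lra) HN);
    apply Rabs_le_between in K11, K22, K12, K21;
    apply Rabs_lt_between in A1, A2; apply Rabs_le_between; split; nra.
  - subst y. rewrite !Rminus_diag, !Rmult_0_l, !Rminus_diag, Rabs_R0. lra.
  - rewrite (Rabs_right (y - lam)) in Hy |- * by lra.
    split; apply Rabs_le_from; try exact 0; intros eta Heta;
    destruct (approx chi F G HG lam y Hgt eta Heta) as [N [HN [A1 A2]]];
    specialize (K11 lam y N ltac:(lra) ltac:(lra) HN);
    specialize (K22 lam y N ltac:(lra) ltac:(lra) HN);
    specialize (K12 lam y N ltac:(lra) ltac:(lra) HN);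
    specialize (K21 lam y N ltac:(lra) ltac:(lra) HN);
    apply Rabs_le_between in K11, K22, K12, K21;
    apply Rabs_lt_between in A1, A2; apply Rabs_le_between; split; nra.
Qed.

From Stdlib Require Import FunctionalExtensionality.

Theorem mainTheorem8 (Hs : Hilbert) (D : Hs -> Prop) (H : Hs -> Hs)
  (E : R -> Hs -> Hs) (f g : Hs) (lam : R) (d : C) (chi : R -> C) (X : Hs -> Hs) :
  selfadjoint D H ->
  spectral_family_of D H E ->
  is_derive (fun m : R => hip (E m f) g) lam d ->
  C0inf chi ->
  is_fun_calc E chi X ->
  is_derive (fun m : R => hip (E m (X f)) g) lam (Cmult (chi lam) d).
Proof.
  intros _ [[Hproj [Hmin _]] _] Hder [Hc1 Hc2] Hfc.
  apply Cdiff_to.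
  apply (assemble chi (fun m => hip (E m f) g)).
  - intros mu.
    assert (Heq : (fun m => hip (E (Rmin mu m) f) g) = (fun m => hip (E m f) (E mu g))).
    { apply functional_extensionality. intros m. rewrite <- Hmin.
      destruct (Hproj mu) as [_ [_ Hsym]]. apply Hsym. }
    rewrite Heq.
    destruct (Hproj mu) as [_ [_ Hsym]]. rewrite Hsym. apply Hfc.
  - apply Cdiff_of. exact Hder.
  - exact Hc1.
  - exact Hc2.
Qed.
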